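(* There is an absolute constant $C>0$ such that the following holds. Let $S$ and $T$ be valid configurations of $n\ge 2$ points each whose smallest enclosing discs have the same center. Then there exists a translation $\vec v$ such that the unlabeled problem from $S$ to $T+\vec v$ is feasible, $|\vec v|\le C\,(r(S)+r(T))\,n$, and $r(S\cup(T+\vec v))\le C\,(r(S)+r(T))\,n$.
   Context: For $p\in\mathbb R^2$, $D(p)$ is the open unit disc centered at $p$. A configuration is a finite set of points in $\mathbb R^2$; it is valid if any two distinct points are at distance at least $2$. $r(P)$ is the radius of the smallest closed disc containing the point set $P$. The unlabeled problem from $S$ to $T'$ is feasible if there exist a bijection $M:S\to T'$ and an ordering $s_1,\dots,s_n$ of $S$ such that for each $i$ the region $\mathrm{conv}(D(s_i)\cup D(M(s_i)))$ swept by translating $D(s_i)$ straight to $M(s_i)$ is disjoint from $D(s_j)$ for all $j>i$ and from $D(M(s_j))$ for all $j<i$. *)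

(* Defs.v *)
From Stdlib Require Import Reals Lra List Permutation.
From Coquelicot Require Import Coquelicot.
Open Scope R_scope.

Definition point := (R * R)%type.

Definition dist2 (p q : point) : R :=
  sqrt ((fst p - fst q) ^ 2 + (snd p - snd q) ^ 2).

Definition padd (p q : point) : point := (fst p + fst q, snd p + snd q).
Definition pscale (a : R) (p : point) : point := (a * fst p, a * snd p).

Definition D (p : point) (q : point) : Prop := dist2 q p < 1.

Definition convex_set (K : point -> Prop) : Prop :=
  forall x y lam, K x -> K y -> 0 <= lam <= 1 ->
    K (padd (pscale lam x) (pscale (1 - lam) y)).
Definition conv (A : point -> Prop) (q : point) : Prop :=
  forall K, convex_set K -> (forall x, A x -> K x) -> K q.

Definition swept (s t : point) : point -> Prop :=
  conv (fun q => D s q \/ D t q).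

Definition disjoint (A B : point -> Prop) : Prop := forall q, ~ (A q /\ B q).

Definition valid (P : list point) : Prop :=
  forall i j, (i < length P)%nat -> (j < length P)%nat -> i <> j ->
    dist2 (nth i P (0,0)) (nth j P (0,0)) >= 2.

(* r(P): radius of the smallest closed disc containing P (infimum of
   radii of enclosing closed discs; attained for finite P). *)
Definition r (P : list point) : R :=
  real (Glb_Rbar (fun rho => exists c : point,
          forall p, In p P -> dist2 p c <= rho)).

Definition sed_center (P : list point) (c : point) : Prop :=
  forall p, In p P -> dist2 p c <= r P.

Definition translate (P : list point) (v : point) : list point :=
  map (fun p => padd p v) P.

(* unlabeled problem from S to T' is feasible: there is an ordering
   s_1..s_n of S (ord) and a bijection M given by M(s_i) = tgt_i, where
   tgt is an ordering of T'. *)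
Definition feasible (S T' : list point) : Prop :=
  exists ord tgt : list point,
    Permutation ord S /\ Permutation tgt T' /\ length ord = length tgt /\
    forall i, (i < length ord)%nat ->
      (forall j, (i < j < length ord)%nat ->
          disjoint (swept (nth i ord (0,0)) (nth i tgt (0,0))) (D (nth j ord (0,0)))) /\
      (forall j, (j < i)%nat ->
          disjoint (swept (nth i ord (0,0)) (nth i tgt (0,0))) (D (nth j tgt (0,0)))).

Definition norm2 (v : point) : R := dist2 v (0,0).

(* Main.v *)
From Stdlib Require Import Reals Lra Psatz List Permutation Sorted ZArith Classical.
From Coquelicot Require Import Coquelicot.
Require Import Defs.
From Stdlib Require Import Reals List.
Open Scope R_scope.


Lemma sqnn (x:R) : 0 <= x*x.
Proof. apply Rle_0_sqr. Qed.

Lemma core_tight ax ay ux uy wx wy L eta R0 mu :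
  4 <= ax*ax+ay*ay -> ax*ux+ay*uy <= -eta -> ax*ax+ay*ay < 25/4 ->
  wx*wx+wy*wy <= R0*R0 -> 0 <= R0 -> 5/2*R0 <= L*eta -> 0 <= L -> 0 <= mu <= 1 ->
  4 <= (ax - mu*(L*ux+wx))*(ax - mu*(L*ux+wx)) + (ay - mu*(L*uy+wy))*(ay - mu*(L*uy+wy)).
Proof.
  intros H1 H2 H3 H4 H5 H6 HL H7.
  assert (CS : (ax*wx+ay*wy)*(ax*wx+ay*wy) <= (ax*ax+ay*ay)*(wx*wx+wy*wy)).
  { assert (0 <= (ax*wy-ay*wx)*(ax*wy-ay*wx)) by apply sqnn. nra. }
  assert (Hd : ax*wx+ay*wy <= 5/2*R0).
  { destruct (Rle_or_lt (ax*wx+ay*wy) (5/2*R0)) as [h|h]; auto.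
    exfalso. assert (0 <= ax*ax+ay*ay) by nra.
    assert ((ax*ax+ay*ay)*(wx*wx+wy*wy) <= 25/4*(R0*R0)) by nra. nra. }
  assert (Hdot : ax*(L*ux+wx)+ay*(L*uy+wy) <= 0).
  { replace (ax*(L*ux+wx)+ay*(L*uy+wy)) with (L*(ax*ux+ay*uy) + (ax*wx+ay*wy)) by ring.
    assert (L*(ax*ux+ay*uy) <= L*(-eta)) by (apply Rmult_le_compat_l; lra).
    nra. }
  set (dx := L*ux+wx) in *. set (dy := L*uy+wy) in *.
  assert (0 <= mu*mu*(dx*dx+dy*dy)) by (apply Rmult_le_pos; nra).
  nra.
Qed.

Lemma core_loose ax ay ux uy wx wy L R0 mu :
  25/4 <= ax*ax+ay*ay -> ax*ux+ay*uy <= 0 -> 1 <= ux*ux+uy*uy ->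
  wx*wx+wy*wy <= R0*R0 -> 0 <= R0 -> 3*R0 <= L -> 0 <= mu <= 1 ->
  4 <= (ax - mu*(L*ux+wx))*(ax - mu*(L*ux+wx)) + (ay - mu*(L*uy+wy))*(ay - mu*(L*uy+wy)).
Proof.
  intros H1 H2 H3 H4 H5 H6 H7.
  set (bx := ax - mu*L*ux). set (by' := ay - mu*L*uy).
  assert (Hb : 25/4 + mu*mu*(L*L) <= bx*bx+by'*by').
  { unfold bx, by'.
    assert (0 <= mu*L) by nra.
    assert (0 <= mu*L*(-(ax*ux+ay*uy))) by nra.
    assert (mu*L*(mu*L) <= mu*L*(mu*L)*(ux*ux+uy*uy)) by nra.
    nra. }
  replace (ax - mu*(L*ux+wx)) with (bx - mu*wx) by (unfold bx; ring).
  replace (ay - mu*(L*uy+wy)) with (by' - mu*wy) by (unfold by'; ring).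
  assert (2*(bx*(mu*wx)+by'*(mu*wy)) <= 1/4*(bx*bx+by'*by') + 4*(mu*mu)*(wx*wx+wy*wy)).
  { assert (0 <= (1/2*bx - 2*mu*wx)*(1/2*bx - 2*mu*wx)) by apply sqnn.
    assert (0 <= (1/2*by' - 2*mu*wy)*(1/2*by' - 2*mu*wy)) by apply sqnn.
    nra. }
  assert (mu*mu*(wx*wx+wy*wy) <= mu*mu*(R0*R0)) by (apply Rmult_le_compat_l; nra).
  assert (R0*R0*9 <= L*L) by nra.
  nra.
Qed.

Definition sqd (p q : point) : R :=
  (fst p - fst q)*(fst p - fst q) + (snd p - snd q)*(snd p - snd q).

Lemma sqd_nn p q : 0 <= sqd p q.
Proof. unfold sqd. pose proof (sqnn (fst p - fst q)). pose proof (sqnn (snd p - snd q)). lra. Qed.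

Lemma dist2_sqd p q : dist2 p q = sqrt (sqd p q).
Proof. unfold dist2, sqd. f_equal. ring. Qed.

Lemma D_sq p q : D p q <-> sqd q p < 1.
Proof.
  unfold D. rewrite dist2_sqd. pose proof (sqd_nn q p). split; intro h.
  - destruct (Rlt_or_le (sqd q p) 1) as [h'|h']; auto.
    apply sqrt_le_1_alt in h'. rewrite sqrt_1 in h'. lra.
  - rewrite <- sqrt_1. apply sqrt_lt_1_alt. lra.
Qed.

Lemma dist2_ge2 p q : dist2 p q >= 2 -> 4 <= sqd p q.
Proof.
  rewrite dist2_sqd. intro h. pose proof (sqd_nn p q).
  destruct (Rlt_or_le (sqd p q) 4) as [h'|h']; auto.
  assert (sqrt (sqd p q) < sqrt 4) by (apply sqrt_lt_1_alt; lra).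
  replace 4 with (2*2) in H0 by ring. rewrite sqrt_square in H0; lra.
Qed.

Definition pt (s t : point) (mu : R) : point :=
  (fst s + mu*(fst t - fst s), snd s + mu*(snd t - snd s)).

Definition Kset (s t : point) (q : point) : Prop :=
  exists mu, 0 <= mu <= 1 /\ sqd q (pt s t mu) < 1.

Lemma Kset_convex s t : convex_set (Kset s t).
Proof.
  intros x y lam [m1 [Hm1 H1]] [m2 [Hm2 H2]] Hl.
  exists (lam*m1 + (1-lam)*m2). split.
  { split; nra. }
  unfold sqd, pt, padd, pscale in *; simpl in *.
  set (a1 := fst x - (fst s + m1 * (fst t - fst s))) in *.
  set (b1 := snd x - (snd s + m1 * (snd t - snd s))) in *.
  set (a2 := fst y - (fst s + m2 * (fst t - fst s))) in *.
  set (b2 := snd y - (snd s + m2 * (snd t - snd s))) in *.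
  replace (lam * fst x + (1 - lam) * fst y -
     (fst s + (lam * m1 + (1 - lam) * m2) * (fst t - fst s))) with (lam*a1+(1-lam)*a2)
   by (unfold a1, a2; ring).
  replace (lam * snd x + (1 - lam) * snd y -
     (snd s + (lam * m1 + (1 - lam) * m2) * (snd t - snd s))) with (lam*b1+(1-lam)*b2)
   by (unfold b1, b2; ring).
  assert (E : (lam*a1+(1-lam)*a2)*(lam*a1+(1-lam)*a2) + (lam*b1+(1-lam)*b2)*(lam*b1+(1-lam)*b2)
     = lam*(a1*a1+b1*b1) + (1-lam)*(a2*a2+b2*b2) - lam*(1-lam)*((a1-a2)*(a1-a2)+(b1-b2)*(b1-b2))) by ring.
  rewrite E.
  assert (0 <= lam*(1-lam)*((a1-a2)*(a1-a2)+(b1-b2)*(b1-b2))).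
  { apply Rmult_le_pos; [nra|]. pose proof (sqnn (a1-a2)); pose proof (sqnn (b1-b2)); lra. }
  destruct (Req_dec lam 0) as [->|]. { lra. }
  assert (lam*(a1*a1+b1*b1) < lam*1) by (apply Rmult_lt_compat_l; lra).
  assert ((1-lam)*(a2*a2+b2*b2) <= (1-lam)*1) by (apply Rmult_le_compat_l; lra).
  lra.
Qed.

Lemma swept_K s t q : swept s t q -> Kset s t q.
Proof.
  intro h. apply h. apply Kset_convex.
  intros x [hx|hx]; apply D_sq in hx.
  - exists 0. split; [lra|]. unfold pt. replace (fst s + 0 * (fst t - fst s)) with (fst s) by ring.
    replace (snd s + 0 * (snd t - snd s)) with (snd s) by ring. destruct s; exact hx.
  - exists 1. split; [lra|]. unfold pt. replace (fst s + 1 * (fst t - fst s)) with (fst t) by ring.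
    replace (snd s + 1 * (snd t - snd s)) with (snd t) by ring. destruct t; exact hx.
Qed.

Lemma disjoint_of s t x :
  (forall mu, 0 <= mu <= 1 -> 4 <= sqd x (pt s t mu)) -> disjoint (swept s t) (D x).
Proof.
  intros H q [h1 h2]. apply swept_K in h1. destruct h1 as [mu [Hm h1]].
  apply D_sq in h2. specialize (H mu Hm). revert H h1 h2. unfold sqd, pt. simpl.
  set (p1 := fst s + mu * (fst t - fst s)). set (p2 := snd s + mu * (snd t - snd s)).
  intros H h1 h2.
  pose proof (sqnn (fst q - p1 - (fst q - fst x))).
  pose proof (sqnn (snd q - p2 - (snd q - snd x))).
  pose proof (sqnn (fst q - p1 + (fst q - fst x))).
  pose proof (sqnn (snd q - p2 + (snd q - snd x))).
  nra.
Qed.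

Fixpoint ins (key : point -> R) (x : point) (l : list point) : list point :=
  match l with
  | nil => x :: nil
  | y :: l' => if Rle_dec (key y) (key x) then x :: l else y :: ins key x l'
  end.

Fixpoint isort (key : point -> R) (l : list point) : list point :=
  match l with nil => nil | x :: l' => ins key x (isort key l') end.

Lemma ins_perm key x l : Permutation (ins key x l) (x :: l).
Proof.
  induction l as [|y l IH]; simpl; auto.
  destruct (Rle_dec (key y) (key x)); auto.
  eapply perm_trans. apply perm_skip, IH. apply perm_swap.
Qed.

Lemma isort_perm key l : Permutation (isort key l) l.
Proof.
  induction l as [|x l IH]; simpl; auto.
  eapply perm_trans. apply ins_perm. auto.
Qed.

Definition geK (key : point -> R) (a b : point) : Prop := key b <= key a.

Lemma ins_sorted key x l : StronglySorted (geK key) l -> StronglySorted (geK key) (ins key x l).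
Proof.
  induction l as [|y l IH]; simpl; intro H.
  - constructor; auto.
  - inversion H; subst. destruct (Rle_dec (key y) (key x)) as [h|h].
    + constructor; auto. constructor; [unfold geK; lra|].
      eapply Forall_impl; [|exact H3]. unfold geK; intros; lra.
    + constructor; auto. apply Forall_forall. intros z Hz.
      apply (Permutation_in _ (ins_perm key x l)) in Hz. destruct Hz as [<-|Hz].
      * unfold geK; lra.
      * rewrite Forall_forall in H3; auto.
Qed.

Lemma isort_sorted key l : StronglySorted (geK key) (isort key l).
Proof. induction l; simpl; [constructor|]. apply ins_sorted; auto. Qed.

Lemma sorted_nth key l d i j : StronglySorted (geK key) l -> (i < j < length l)%nat ->
  key (nth j l d) <= key (nth i l d).
Proof.
  revert i j. induction l as [|x l IH]; intros i j H Hij; simpl in *; [lia|].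
  inversion H; subst. destruct i as [|i]; destruct j as [|j]; try lia.
  - rewrite Forall_forall in H3. apply H3. apply nth_In. lia.
  - apply IH; auto. lia.
Qed.

Lemma dist2_nn p q : 0 <= dist2 p q.
Proof. unfold dist2. apply sqrt_pos. Qed.

Lemma dist2_tri p c q : dist2 p q <= dist2 p c + dist2 c q.
Proof.
  rewrite !dist2_sqd.
  set (a1 := fst p - fst c). set (a2 := snd p - snd c).
  set (b1 := fst c - fst q). set (b2 := snd c - snd q).
  assert (EA : sqd p c = a1*a1+a2*a2) by reflexivity.
  assert (EB : sqd c q = b1*b1+b2*b2) by reflexivity.
  assert (EX : sqd p q = (a1*a1+a2*a2) + (b1*b1+b2*b2) + 2*(a1*b1+a2*b2))
    by (unfold sqd, a1, a2, b1, b2; ring).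
  rewrite EA, EB, EX.
  pose proof (sqnn a1); pose proof (sqnn a2); pose proof (sqnn b1); pose proof (sqnn b2).
  set (A := a1*a1+a2*a2) in *. set (B := b1*b1+b2*b2) in *.
  assert (HA : 0 <= A) by (unfold A; lra). assert (HB : 0 <= B) by (unfold B; lra).
  pose proof (sqrt_pos A); pose proof (sqrt_pos B).
  assert (Hdot : a1*b1+a2*b2 <= sqrt A * sqrt B).
  { destruct (Rle_or_lt (a1*b1+a2*b2) 0). { nra. }
    assert ((a1*b1+a2*b2)*(a1*b1+a2*b2) <= A*B).
    { unfold A, B. pose proof (sqnn (a1*b2-a2*b1)). nra. }
    assert (sqrt A * sqrt B * (sqrt A * sqrt B) = A*B).
    { replace (sqrt A * sqrt B * (sqrt A * sqrt B)) with ((sqrt A * sqrt A) * (sqrt B * sqrt B)) by ring.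
      rewrite !sqrt_sqrt; auto. }
    assert (0 <= sqrt A * sqrt B) by (apply Rmult_le_pos; auto).
    destruct (Rle_or_lt (a1*b1+a2*b2) (sqrt A * sqrt B)) as [h|h]; auto.
    exfalso. assert (sqrt A * sqrt B * (sqrt A * sqrt B) < (a1*b1+a2*b2)*(a1*b1+a2*b2)).
    { apply Rle_lt_trans with (sqrt A * sqrt B * (a1*b1+a2*b2)).
      - apply Rmult_le_compat_l; lra.
      - apply Rmult_lt_compat_r; lra. }
    lra. }
  rewrite <- (sqrt_square (sqrt A + sqrt B)) by lra.
  apply sqrt_le_1_alt.
  replace ((sqrt A + sqrt B) * (sqrt A + sqrt B)) with
    (sqrt A * sqrt A + sqrt B * sqrt B + 2 * (sqrt A * sqrt B)) by ring.
  rewrite !sqrt_sqrt; auto. lra.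
Qed.

Lemma sqd_le_of_dist p q R : dist2 p q <= R -> sqd p q <= R*R.
Proof.
  intro h. pose proof (dist2_nn p q). rewrite dist2_sqd in *.
  rewrite <- (sqrt_sqrt (sqd p q)) by apply sqd_nn. nra.
Qed.

Lemma r_le P rho : P <> nil -> (exists c, forall p, In p P -> dist2 p c <= rho) -> r P <= rho.
Proof.
  intros HP Hc. unfold r.
  set (E := fun rho0 => exists c : point, forall p, In p P -> dist2 p c <= rho0).
  destruct (Glb_Rbar_correct E) as [Hlb Hgr].
  assert (h1 : Rbar_le (Glb_Rbar E) rho) by (apply Hlb; exact Hc).
  assert (h2 : Rbar_le 0 (Glb_Rbar E)).
  { apply Hgr. intros x [c Hx]. destruct P as [|p0 P']; [congruence|].
    specialize (Hx p0 (or_introl eq_refl)). simpl. pose proof (dist2_nn p0 c). lra. }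
  destruct (Glb_Rbar E); simpl in *; auto; try contradiction.
Qed.

Definition mk (M k : nat) : R := INR k / INR M.
Definition badk (M : nat) (a : point) (k : nat) : Prop :=
  - (1 / (2 * INR M)) < fst a + mk M k * snd a < 1 / (2 * INR M).
Definition tight (a : point) : Prop :=
  4 <= fst a * fst a + snd a * snd a < 25/4.

Lemma mk_range M k : (0 < M)%nat -> (k <= M)%nat -> 0 <= mk M k <= 1.
Proof.
  intros HM Hk. unfold mk. apply lt_0_INR in HM. apply le_INR in Hk.
  pose proof (pos_INR k). split.
  - apply Rmult_le_pos; auto. left; apply Rinv_0_lt_compat; auto.
  - apply Rmult_le_reg_r with (INR M); auto. unfold Rdiv. rewrite Rmult_assoc, Rinv_l; lra.
Qed.

Lemma bad_unique M a k1 k2 : (0 < M)%nat -> tight a -> (k1 <= M)%nat -> (k2 <= M)%nat ->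
  badk M a k1 -> badk M a k2 -> k1 = k2.
Proof.
  intros HM [Ht1 Ht2] H1 H2 B1 B2. unfold badk in *.
  pose proof (mk_range _ _ HM H1). pose proof (mk_range _ _ HM H2).
  assert (HMr : 1 <= INR M) by (apply (le_INR 1); lia).
  set (e := 1 / (2 * INR M)) in *.
  assert (He : 0 < e <= 1/2).
  { unfold e. split. apply Rdiv_lt_0_compat; lra.
    apply Rmult_le_reg_r with (2 * INR M); [lra|]. unfold Rdiv. rewrite Rmult_assoc, Rinv_l; lra. }
  set (x := fst a) in *. set (y := snd a) in *.
  destruct (Rlt_or_le (y*y) 1) as [hy|hy].
  - exfalso. set (m := mk M k1) in *.
    assert (Hyy : y < 1 /\ -1 < y) by (split; nra).
    assert (x*x > 3) by lra.
    assert (Hx : x > 17/10 \/ x < -17/10) by (destruct (Rle_or_lt 0 x); [left|right]; nra).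
    destruct Hyy as [Hyy Hyy']. destruct Hx; nra.
  - assert (Hd : -(2*e) < (mk M k1 - mk M k2) * y < 2*e) by (split; nra).
    destruct (Nat.eq_dec k1 k2) as [|hne]; auto. exfalso.
    assert (Hk : 1 <= Rabs (INR k1 - INR k2)).
    { destruct (Nat.lt_ge_cases k1 k2) as [h|h].
      - assert (h' : INR (S k1) <= INR k2) by (apply le_INR; lia).
        rewrite S_INR in h'. rewrite Rabs_left1; lra.
      - assert (k2 < k1)%nat by lia.
        assert (h' : INR (S k2) <= INR k1) by (apply le_INR; lia).
        rewrite S_INR in h'. rewrite Rabs_right; lra. }
    assert (Em : mk M k1 - mk M k2 = (INR k1 - INR k2) * (2*e)).
    { unfold mk, e. field. lra. }
    rewrite Em in Hd.
    assert (1 <= Rabs y) by (destruct (Rle_or_lt 0 y); [rewrite Rabs_right|rewrite Rabs_left]; nra).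
    assert (H5 : Rabs ((INR k1 - INR k2) * (2 * e) * y) < 2*e) by (apply Rabs_def1; lra).
    rewrite !Rabs_mult in H5. rewrite (Rabs_right 2) in H5 by lra. rewrite (Rabs_right e) in H5 by lra.
    assert (1 <= Rabs (INR k1 - INR k2) * Rabs y) by nra. nra.
Qed.

Lemma cover_list M A : (0 < M)%nat -> exists l, (length l <= length A)%nat /\
  forall a, In a A -> forall k, (k <= M)%nat -> tight a -> badk M a k -> In k l.
Proof.
  intro HM. induction A as [|a A [l [Hl Hc]]].
  - exists nil. simpl. split; [lia|tauto].
  - destruct (classic (exists k, (k <= M)%nat /\ tight a /\ badk M a k)) as [[k0 [Hk0 [Ht Hb]]]|hn].
    + exists (k0 :: l). simpl. split; [lia|]. intros b [<-|Hb'] k Hk Htb Hbb.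
      * left. symmetry. eapply bad_unique; eauto.
      * right. eauto.
    + exists l. simpl. split; [lia|]. intros b [<-|Hb'] k Hk Htb Hbb.
      * exfalso. apply hn. eauto.
      * eauto.
Qed.

Lemma pick_free M (l : list nat) : (length l < S M)%nat -> exists k, (k <= M)%nat /\ ~ In k l.
Proof.
  intro Hl. apply NNPP. intro hn.
  assert (incl (seq 0 (S M)) l).
  { intros k Hk. apply in_seq in Hk. apply NNPP. intro h. apply hn. exists k. split; [lia|auto]. }
  pose proof (NoDup_incl_length (seq_NoDup (S M) 0) H). rewrite length_seq in H0. lia.
Qed.

Definition sep (P : list point) : Prop :=
  forall p q, In p P -> In q P -> p <> q -> 4 <= sqd p q.

Definition tb (p q : point) : bool := if Rlt_dec (sqd q p) (25/4) then true else false.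

Definition cell (p q : point) : Z * Z :=
  (up ((fst q - fst p + 5/2) * (4/5)), up ((snd q - snd p + 5/2) * (4/5))).

Lemma up_range x : 0 < x < 4 -> (1 <= up x <= 4)%Z.
Proof.
  intro h. destruct (archimed x) as [h1 h2]. split.
  - assert (H : 0 < IZR (up x)) by lra. apply lt_IZR in H. lia.
  - assert (H : IZR (up x) < 5) by lra. apply lt_IZR in H. lia.
Qed.

Lemma up_close x y : up x = up y -> x - y < 1 /\ y - x < 1.
Proof.
  intro h. destruct (archimed x) as [h1 h2]. destruct (archimed y) as [h3 h4].
  rewrite h in h1, h2. lra.
Qed.

Lemma NoDup_map_inj_on {A B} (f : A -> B) (l : list A) :
  NoDup l -> (forall x y, In x l -> In y l -> f x = f y -> x = y) -> NoDup (map f l).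
Proof.
  induction l as [|a l IH]; simpl; intros Hn Hi; constructor.
  - intro h. apply in_map_iff in h. destruct h as [x [Hx Hxl]].
    inversion Hn; subst. assert (x = a) by (apply Hi; auto). subst; contradiction.
  - inversion Hn; subst. apply IH; auto.
Qed.

Definition cells16 : list (Z*Z) := list_prod (1::2::3::4::nil)%Z (1::2::3::4::nil)%Z.

Lemma in14 z : (1 <= z <= 4)%Z -> In z (1::2::3::4::nil)%Z.
Proof. intro h. assert (z = 1 \/ z = 2 \/ z = 3 \/ z = 4)%Z by lia. destruct H as [e|[e|[e|e]]]; subst z; simpl; auto. Qed.

Lemma packing P p : NoDup P -> sep P -> (length (filter (tb p) P) <= 16)%nat.
Proof.
  intros Hn Hs. set (F := filter (tb p) P).
  assert (HF : forall q, In q F -> In q P /\ sqd q p < 25/4).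
  { intros q Hq. apply filter_In in Hq. destruct Hq as [h1 h2]. split; auto.
    unfold tb in h2. destruct (Rlt_dec (sqd q p) (25/4)); congruence. }
  assert (Hnd : NoDup (map (cell p) F)).
  { apply NoDup_map_inj_on. apply NoDup_filter; auto.
    intros x y Hx Hy Hc. apply HF in Hx. apply HF in Hy. destruct Hx as [Hx _]. destruct Hy as [Hy _].
    apply NNPP. intro hne. specialize (Hs x y Hx Hy hne). unfold cell in Hc.
    injection Hc as Hc1 Hc2. apply up_close in Hc1. apply up_close in Hc2. unfold sqd in Hs.
    assert (-5/4 < fst x - fst y < 5/4) by lra.
    assert (-5/4 < snd x - snd y < 5/4) by lra.
    nra. }
  assert (Hinc : incl (map (cell p) F) cells16).
  { intros c Hc. apply in_map_iff in Hc. destruct Hc as [q [<- Hq]]. apply HF in Hq.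
    destruct Hq as [_ Hq]. unfold sqd in Hq. unfold cell, cells16. apply in_prod; apply in14; apply up_range.
    - pose proof (sqnn (snd q - snd p)). assert ((fst q - fst p) * (fst q - fst p) < 25/4) by lra.
      assert (-5/2 < fst q - fst p < 5/2) by (split; nra). lra.
    - pose proof (sqnn (fst q - fst p)). assert ((snd q - snd p) * (snd q - snd p) < 25/4) by lra.
      assert (-5/2 < snd q - snd p < 5/2) by (split; nra). lra. }
  pose proof (NoDup_incl_length Hnd Hinc). rewrite length_map in H. exact H.
Qed.

Definition diff (q p : point) : point := (fst q - fst p, snd q - snd p).

Definition TL (P : list point) : list point :=
  flat_map (fun p => map (fun q => diff q p) (filter (tb p) P)) P.

Lemma TL_in P p q : In p P -> In q P -> sqd q p < 25/4 -> In (diff q p) (TL P).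
Proof.
  intros hp hq hd. unfold TL. apply in_flat_map. exists p. split; auto.
  apply (in_map (fun q0 => diff q0 p)). apply filter_In. split; auto. unfold tb. destruct (Rlt_dec (sqd q p) (25/4)); auto.
Qed.

Lemma TL_length P : NoDup P -> sep P -> (length (TL P) <= 16 * length P)%nat.
Proof.
  intros Hn Hs. unfold TL.
  assert (forall O, (length (flat_map (fun p => map (fun q => diff q p) (filter (tb p) P)) O) <= 16 * length O)%nat).
  { induction O as [|o O IH]; simpl; [lia|]. rewrite length_app, length_map.
    pose proof (packing P o Hn Hs). lia. }
  apply H.
Qed.


Lemma core_all (a w : point) m L eta R0 mu :
  4 <= fst a*fst a+snd a*snd a -> fst a * 1 + snd a * m <= 0 ->
  (fst a*fst a+snd a*snd a < 25/4 -> fst a * 1 + snd a * m <= -eta) ->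
  fst w*fst w+snd w*snd w <= R0*R0 -> 0 <= R0 -> 5/2*R0 <= L*eta -> 3*R0 <= L -> 0 <= mu <= 1 ->
  4 <= (fst a - mu*(L*1+fst w))*(fst a - mu*(L*1+fst w)) + (snd a - mu*(L*m+snd w))*(snd a - mu*(L*m+snd w)).
Proof.
  intros H1 H2 H3 H4 H5 H6 H7 H8.
  destruct (Rlt_or_le (fst a*fst a+snd a*snd a) (25/4)) as [h|h].
  - eapply core_tight; eauto; lra.
  - eapply core_loose; eauto. pose proof (sqnn m). lra.
Qed.

Lemma valid_props P : valid P -> NoDup P /\ sep P.
Proof.
  intro Hv. split.
  - apply (NoDup_nth P (0,0)). intros i j Hi Hj He. destruct (Nat.eq_dec i j); auto.
    exfalso. specialize (Hv i j Hi Hj n). rewrite He in Hv. unfold dist2 in Hv.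
    replace ((fst (nth j P (0, 0)) - fst (nth j P (0, 0))) ^ 2 +
     (snd (nth j P (0, 0)) - snd (nth j P (0, 0))) ^ 2) with 0 in Hv by ring.
    rewrite sqrt_0 in Hv. lra.
  - intros p q Hp Hq Hne. destruct (In_nth P p (0,0) Hp) as [i [Hi <-]].
    destruct (In_nth P q (0,0) Hq) as [j [Hj <-]]. apply dist2_ge2. apply Hv; auto.
    intro e. subst. congruence.
Qed.

Lemma nth_distinct (l : list point) d i j : NoDup l -> (i < length l)%nat -> (j < length l)%nat -> i <> j ->
  nth i l d <> nth j l d.
Proof. intros Hn Hi Hj Hne He. apply Hne. eapply (proj1 (NoDup_nth l d)); eauto. Qed.

Lemma dist2_sym p q : dist2 p q = dist2 q p.
Proof. unfold dist2. f_equal. ring. Qed.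

Lemma sqd_w s t c rS rT : dist2 s c <= rS -> dist2 t c <= rT -> sqd t s <= (rS+rT)*(rS+rT).
Proof.
  intros h1 h2. apply sqd_le_of_dist. pose proof (dist2_tri t c s). rewrite (dist2_sym c s) in H. lra.
Qed.

Lemma nth_translate (l : list point) v i d : (i < length l)%nat ->
  nth i (translate l v) d = padd (nth i l d) v.
Proof.
  intro h. unfold translate. rewrite (nth_indep _ _ (padd d v)) by (rewrite length_map; auto).
  apply (map_nth (fun p => padd p v)).
Qed.

Lemma dist2_padd t v c : dist2 (padd t v) c <= dist2 t c + norm2 v.
Proof.
  pose proof (dist2_tri (padd t v) t c). rewrite (dist2_sym t c) in H.
  assert (dist2 (padd t v) t = norm2 v) by (unfold norm2, dist2, padd; simpl; f_equal; ring).
  rewrite (dist2_sym c t) in H. lra.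
Qed.

Lemma sqrt_le_of x y : 0 <= y -> x <= y*y -> sqrt x <= y.
Proof. intros h1 h2. rewrite <- (sqrt_square y) by auto. apply sqrt_le_1_alt. auto. Qed.


Theorem mainTheorem7 :
  exists C : R, 0 < C /\
    forall (n : nat) (S T : list point),
      (2 <= n)%nat -> length S = n -> length T = n ->
      valid S -> valid T ->
      (exists c : point, sed_center S c /\ sed_center T c) ->
      exists v : point,
        feasible S (translate T v) /\
        norm2 v <= C * (r S + r T) * INR n /\
        r (S ++ translate T v) <= C * (r S + r T) * INR n.
Proof.
  exists 400. split; [lra|].
  intros n S T Hn HlS HlT HvS HvT [c [HcS HcT]].
  destruct (valid_props S HvS) as [NdS SpS].
  destruct (valid_props T HvT) as [NdT SpT].
  assert (HnR : 2 <= INR n) by (apply (le_INR 2); auto).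
  assert (HrS : 0 <= r S).
  { destruct S as [|p0 S']; simpl in HlS; [lia|].
    pose proof (HcS p0 (or_introl eq_refl)). pose proof (dist2_nn p0 c). lra. }
  assert (HrT : 0 <= r T).
  { destruct T as [|p0 T']; simpl in HlT; [lia|].
    pose proof (HcT p0 (or_introl eq_refl)). pose proof (dist2_nn p0 c). lra. }
  set (R0 := r S + r T).
  assert (HR0 : 0 <= R0) by (unfold R0; lra).
  set (M := (32 * n)%nat).
  assert (HM : (0 < M)%nat) by (unfold M; lia).
  destruct (cover_list M (TL S ++ TL T) HM) as [l [Hl Hcov]].
  assert (HlenTL : (length (TL S ++ TL T) <= 32 * n)%nat).
  { rewrite length_app. pose proof (TL_length S NdS SpS). pose proof (TL_length T NdT SpT). lia. }
  destruct (pick_free M l) as [k [Hk Hkl]]. { unfold M. lia. }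
  assert (Good : forall a, In a (TL S ++ TL T) -> tight a -> ~ badk M a k).
  { intros a Ha Ht Hb. apply Hkl. eapply Hcov; eauto. }
  set (m := mk M k).
  pose proof (mk_range M k HM Hk) as Hm. fold m in Hm.
  set (eta := 1 / (2 * INR M)).
  set (L := 160 * R0 * INR n).
  assert (HMn : INR M = 32 * INR n) by (unfold M; rewrite mult_INR; simpl; ring).
  assert (HLeta : 5/2*R0 <= L*eta).
  { unfold L, eta. rewrite HMn. right. field. lra. }
  assert (HL3 : 3*R0 <= L) by (unfold L; nra).
  assert (HL0 : 0 <= L) by lra.
  set (v := (L, L*m)).
  set (key := fun p : point => fst p * 1 + snd p * m).
  assert (Hnorm : norm2 v <= 2*L).
  { unfold norm2, dist2, v; simpl. apply sqrt_le_of; [lra|].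
    destruct Hm as [Hm0 Hm1].
    assert (0 <= L*m) by (apply Rmult_le_pos; lra).
    assert (L*m <= L) by (rewrite <- (Rmult_1_r L) at 2; apply Rmult_le_compat_l; lra).
    assert (L*m*(L*m) <= L*L) by (apply Rmult_le_compat; lra).
    replace ((L - 0) ^ 2 + (L * m - 0) ^ 2) with (L*L + L*m*(L*m)) by ring. nra. }
  exists v. split; [|split].
  2:{ assert (2*L <= 400*R0*INR n) by (unfold L; nra). fold R0. lra. }
  2:{ apply Rle_trans with (R0 + norm2 v).
      - apply r_le.
        + destruct S; simpl in HlS; [lia|]. discriminate.
        + exists c. intros p Hp. apply in_app_or in Hp. destruct Hp as [Hp|Hp].
          * pose proof (HcS p Hp). fold R0. unfold R0. pose proof (dist2_nn v (0,0)). unfold norm2. lra.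
          * unfold translate in Hp. apply in_map_iff in Hp. destruct Hp as [t [<- Ht]].
            pose proof (dist2_padd t v c). pose proof (HcT t Ht). unfold R0. lra.
      - assert (2*L + R0 <= 400*R0*INR n) by (unfold L; nra). fold R0. lra. }
  set (ord := isort key S). set (tgs := isort key T).
  assert (PS : Permutation ord S) by apply isort_perm.
  assert (PT : Permutation tgs T) by apply isort_perm.
  assert (Lo : length ord = n) by (rewrite (Permutation_length PS); auto).
  assert (Lt : length tgs = n) by (rewrite (Permutation_length PT); auto).
  assert (Ndo : NoDup ord) by (apply (Permutation_NoDup (Permutation_sym PS)); auto).
  assert (Ndt : NoDup tgs) by (apply (Permutation_NoDup (Permutation_sym PT)); auto).
  assert (Sto : StronglySorted (geK key) ord) by apply isort_sorted.
  assert (Stt : StronglySorted (geK key) tgs) by apply isort_sorted.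
  assert (Hw : forall i, (i < n)%nat ->
     fst (diff (nth i tgs (0,0)) (nth i ord (0,0))) * fst (diff (nth i tgs (0,0)) (nth i ord (0,0))) +
     snd (diff (nth i tgs (0,0)) (nth i ord (0,0))) * snd (diff (nth i tgs (0,0)) (nth i ord (0,0))) <= R0*R0).
  { intros i Hi. change (sqd (nth i tgs (0,0)) (nth i ord (0,0)) <= R0*R0). unfold R0.
    apply (sqd_w _ _ c).
    - apply HcS. apply (Permutation_in _ PS). apply nth_In. lia.
    - apply HcT. apply (Permutation_in _ PT). apply nth_In. lia. }
  assert (NB : forall a, (fst a*fst a+snd a*snd a < 25/4 -> In a (TL S ++ TL T)) ->
      4 <= fst a*fst a+snd a*snd a ->
      fst a * 1 + snd a * m <= 0 ->
      (fst a*fst a+snd a*snd a < 25/4 -> fst a * 1 + snd a * m <= -eta)).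
  { intros a Ha H4 Hle Ht. specialize (Ha Ht). apply NNPP. intro hc. apply (Good a Ha).
    - split; auto.
    - unfold badk. fold m eta. split; lra. }
  exists ord, (translate tgs v). split; [auto|]. split.
  { unfold translate. apply Permutation_map. auto. }
  split. { unfold translate. rewrite length_map. lia. }
  intros i Hi. rewrite Lo in Hi.
  rewrite nth_translate by lia.
  set (s := nth i ord (0,0)). set (tt := nth i tgs (0,0)).
  assert (Hs : In s S) by (apply (Permutation_in _ PS); apply nth_In; lia).
  assert (Htt : In tt T) by (apply (Permutation_in _ PT); apply nth_In; lia).
  split.
  - intros j Hj. rewrite Lo in Hj. apply disjoint_of. intros mu Hmu.
    set (x := nth j ord (0,0)).
    assert (Hx : In x S) by (apply (Permutation_in _ PS); apply nth_In; lia).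
    assert (Hne : x <> s) by (apply nth_distinct; auto; lia).
    assert (Hsep : 4 <= sqd x s) by (apply SpS; auto).
    assert (Hkey : key x <= key s) by (apply (sorted_nth key ord (0,0) i j); auto; lia).
    assert (E : sqd x (pt s (padd tt v) mu) =
      (fst (diff x s) - mu*(L*1+fst (diff tt s)))*(fst (diff x s) - mu*(L*1+fst (diff tt s))) +
      (snd (diff x s) - mu*(L*m+snd (diff tt s)))*(snd (diff x s) - mu*(L*m+snd (diff tt s)))).
    { unfold sqd, pt, padd, diff, v; simpl. ring. }
    rewrite E. apply core_all with eta R0.
    + exact Hsep.
    + unfold key in Hkey. simpl. lra.
    + apply NB.
      * intro h. apply in_or_app. left. apply TL_in; auto.
      * exact Hsep.
      * unfold key in Hkey. simpl. lra.
    + apply Hw. lia.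
    + exact HR0.
    + exact HLeta.
    + exact HL3.
    + exact Hmu.
  - intros j Hj. rewrite nth_translate by lia. apply disjoint_of. intros mu Hmu.
    set (tj := nth j tgs (0,0)).
    assert (Htj : In tj T) by (apply (Permutation_in _ PT); apply nth_In; lia).
    assert (Hne : tt <> tj) by (apply nth_distinct; auto; lia).
    assert (Hsep : 4 <= sqd tt tj) by (apply SpT; auto).
    assert (Hkey : key tt <= key tj) by (apply (sorted_nth key tgs (0,0) j i); auto; lia).
    assert (E : sqd (padd tj v) (pt s (padd tt v) mu) =
      (fst (diff tt tj) - (1-mu)*(L*1+fst (diff tt s)))*(fst (diff tt tj) - (1-mu)*(L*1+fst (diff tt s))) +
      (snd (diff tt tj) - (1-mu)*(L*m+snd (diff tt s)))*(snd (diff tt tj) - (1-mu)*(L*m+snd (diff tt s)))).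
    { unfold sqd, pt, padd, diff, v; simpl. ring. }
    rewrite E. apply core_all with eta R0.
    + exact Hsep.
    + unfold key in Hkey. simpl. lra.
    + apply NB.
      * intro h. apply in_or_app. right. apply TL_in; auto.
      * exact Hsep.
      * unfold key in Hkey. simpl. lra.
    + apply Hw. lia.
    + exact HR0.
    + exact HLeta.
    + exact HL3.
    + lra.
Qed.
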